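(* Let $E$ be a finite set and let $\mathcal{W}\subseteq\{+,-,0\}^E$ satisfy (A1), (A2) and (A3). Then $\mathcal{W}$ is an affine oriented matroid.
   Context: For $X\in\{+,-,0\}^E$: $X^+=\{e:X_e=+\}$, $X^-=\{e:X_e=-\}$, support $\underline{X}=X^+\cup X^-$; $(-X)_e=-X_e$; composition $(X\circ Y)_e=X_e$ if $X_e\neq0$, else $Y_e$; $S(X,Y)=(X^+\cap Y^-)\cup(X^-\cap Y^+)$; $\mathcal{A}\circ\mathcal{B}=\{A\circ B: A\in\mathcal{A},B\in\mathcal{B}\}$. An oriented matroid on $F$ is $\mathcal{O}\subseteq\{+,-,0\}^F$ with: (O1) zero vector in $\mathcal{O}$; (O2) $X\in\mathcal{O}\Rightarrow -X\in\mathcal{O}$; (O3) $X,Y\in\mathcal{O}\Rightarrow X\circ Y\in\mathcal{O}$; (O4) if $X,Y\in\mathcal{O}$, $\underline{X}=\underline{Y}$, $e\in S(X,Y)$, there is $Z\in\mathcal{O}$ with $Z_e=0$ and $Z_f=(X\circ Y)_f=(Y\circ X)_f$ for all $f\notin S(X,Y)$. $\mathcal{W}\subseteq\{+,-,0\}^E$ is an affine oriented matroid if there exist $g\notin E$ and an oriented matroid $\mathcal{O}$ on $E\cup\{g\}$ with $\mathcal{W}=\{X|_E : X\in\mathcal{O}, X_g=+\}$. For $X,Y$ with $\underline{X}=\underline{Y}$, $X\neq Y$, $e\in S(X,Y)$: $I_e(X,Y)=\{V : \underline{V}\subseteq\underline{X}\setminus\{e\}, V_f=X_f\ \forall f\notin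 S(X,Y)\}$, $I(X,Y)=\bigcup_{e\in S(X,Y)}I_e(X,Y)$. Sum: $(X+Y)_e=0$ if $e\in S(X,Y)$, else $(X\circ Y)_e$. $\mathrm{asym}(\mathcal{W})=\{V\in\mathcal{W}:-V\notin\mathcal{W}\}$, $\mathcal{P}(\mathcal{W})=\{X+(-Y): X,Y\in\mathrm{asym}(\mathcal{W}), \underline{X}=\underline{Y}, I(X,-Y)\cap\mathcal{W}=I(-X,Y)\cap\mathcal{W}=\emptyset\}$. Axioms: (A1) $X,Y\in\mathcal{W}\Rightarrow X\circ Y\in\mathcal{W}$ and $X\circ(-Y)\in\mathcal{W}$; (A2) if $X,Y\in\mathcal{W}$ with $\underline{X}=\underline{Y}$ then $I_e(X,Y)\cap\mathcal{W}\neq\emptyset$ for every $e\in S(X,Y)$; (A3) $\mathcal{P}(\mathcal{W})\circ\mathcal{W}\subseteq\mathcal{W}$. *)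

(* Defs.v *)
From HB Require Import structures.
From mathcomp Require Import all_boot.

Set Implicit Arguments.
Unset Strict Implicit.
Unset Printing Implicit Defensive.

Inductive sign := Plus | Minus | Zero.

Definition sign_to (s : sign) : option bool :=
  match s with Plus => Some true | Minus => Some false | Zero => None end.
Definition sign_of (o : option bool) : sign :=
  match o with Some true => Plus | Some false => Minus | None => Zero end.
Lemma sign_toK : cancel sign_to sign_of. Proof. by case. Qed.
HB.instance Definition _ := Finite.copy sign (can_type sign_toK).

Definition oppS (s : sign) : sign :=
  match s with Plus => Minus | Minus => Plus | Zero => Zero end.

Section SignVectors.
Variable E : finType.
Definition svec := {ffun E -> sign}.

Definition sneg (X : svec) : svec := [ffun e => oppS (X e)].
Definition scomp (X Y : svec) : svec :=
  [ffun e => if X e != Zero then X e else Y e].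
Definition ssupp (X : svec) : {set E} := [set e | X e != Zero].
Definition ssep (X Y : svec) : {set E} :=
  [set e | ((X e == Plus) && (Y e == Minus)) || ((X e == Minus) && (Y e == Plus))].
Definition ssum (X Y : svec) : svec :=
  [ffun e => if e \in ssep X Y then Zero else scomp X Y e].

Definition Ie (e : E) (X Y : svec) : {set svec} :=
  [set V : svec | (ssupp V \subset ssupp X :\ e) &&
                  [forall f, (f \notin ssep X Y) ==> (V f == X f)]].
Definition Iset (X Y : svec) : {set svec} := \bigcup_(e in ssep X Y) Ie e X Y.

Definition asym (W : {set svec}) : {set svec} := [set V in W | sneg V \notin W].

Definition Pset (W : {set svec}) : {set svec} :=
  [set ssum X (sneg Y) | X in asym W, Y in asym W &
     [&& ssupp X == ssupp Y,
         Iset X (sneg Y) :&: W == set0 &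
         Iset (sneg X) Y :&: W == set0]].

Definition axA1 (W : {set svec}) : Prop :=
  forall X Y, X \in W -> Y \in W -> scomp X Y \in W /\ scomp X (sneg Y) \in W.
Definition axA2 (W : {set svec}) : Prop :=
  forall X Y, X \in W -> Y \in W -> ssupp X = ssupp Y ->
    forall e, e \in ssep X Y -> Ie e X Y :&: W != set0.
Definition axA3 (W : {set svec}) : Prop :=
  forall P X, P \in Pset W -> X \in W -> scomp P X \in W.

Definition oriented_matroid (O : {set svec}) : Prop :=
  [/\ [ffun _ => Zero] \in O,
      (forall X, X \in O -> sneg X \in O),
      (forall X Y, X \in O -> Y \in O -> scomp X Y \in O) &
      (forall X Y, X \in O -> Y \in O -> ssupp X = ssupp Y ->
        forall e, e \in ssep X Y ->
        exists2 Z, Z \in O & Z e = Zero /\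
          forall f, f \notin ssep X Y -> Z f = scomp X Y f /\ Z f = scomp Y X f)].
End SignVectors.

Arguments sneg {E}.
Arguments scomp {E}.

(* Restriction of a sign vector on E ∪ {g} (= option E, g = None) to E. *)
Definition srestr (E : finType) (X : svec (option E)) : svec E :=
  [ffun e => X (Some e)].

(* W is an affine oriented matroid: there is an oriented matroid O on
   E ∪ {g} (g a new element, here None : option E) with
   W = { X|_E : X in O, X_g = + }. *)
Definition affine_oriented_matroid (E : finType) (W : {set svec E}) : Prop :=
  exists O : {set svec (option E)},
    oriented_matroid O /\ W = [set srestr X | X in O & X None == Plus].

(* Main.v *)
Require Import Defs.
From mathcomp Require Import all_boot.
Set Implicit Arguments. Unset Strict Implicit. Unset Printing Implicit Defensive.

Section Basics.
Variable E : finType.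
Implicit Types X Y Z V U : svec E.

Lemma in_ssep X Y h : (h \in ssep X Y) =
  ((X h == Plus) && (Y h == Minus)) || ((X h == Minus) && (Y h == Plus)).
Proof. by rewrite inE. Qed.
Lemma in_ssupp X h : (h \in ssupp X) = (X h != Zero).
Proof. by rewrite inE. Qed.
Lemma scompE X Y h : scomp X Y h = if X h != Zero then X h else Y h.
Proof. by rewrite ffunE. Qed.
Lemma snegE X h : sneg X h = oppS (X h).
Proof. by rewrite ffunE. Qed.
Lemma ssumE X Y h : ssum X Y h = if h \in ssep X Y then Zero else scomp X Y h.
Proof. by rewrite ffunE. Qed.
Lemma oppSK s : oppS (oppS s) = s. Proof. by case: s. Qed.
Lemma snegK X : sneg (sneg X) = X.
Proof. by apply/ffunP=> h; rewrite !snegE oppSK. Qed.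

Lemma supp_eqP X Y : ssupp X = ssupp Y -> forall h, (X h == Zero) = (Y h == Zero).
Proof. by move=> e h; move/setP: e => /(_ h); rewrite !in_ssupp => /negb_inj. Qed.
Lemma supp_eqI X Y : (forall h, (X h == Zero) = (Y h == Zero)) -> ssupp X = ssupp Y.
Proof. by move=> e; apply/setP=> h; rewrite !in_ssupp e. Qed.
Lemma supp_neg X : ssupp (sneg X) = ssupp X.
Proof. by apply: supp_eqI=> h; rewrite snegE; case: (X h). Qed.

Lemma sepN X Y h : (h \in ssep X (sneg Y)) = (X h == Y h) && (X h != Zero).
Proof. by rewrite in_ssep snegE; case: (X h); case: (Y h). Qed.
Lemma sep_sym X Y h : (h \in ssep X Y) = (h \in ssep Y X).
Proof. by rewrite !in_ssep; case: (X h); case: (Y h). Qed.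
Lemma offS X Y h : ssupp X = ssupp Y -> h \notin ssep X (sneg Y) -> X h = oppS (Y h).
Proof. by move/supp_eqP/(_ h); rewrite sepN; case: (X h); case: (Y h). Qed.
Lemma offS0 X Y h : ssupp X = ssupp Y -> h \notin ssep X Y -> X h = Y h.
Proof. by move/supp_eqP/(_ h); rewrite in_ssep; case: (X h); case: (Y h). Qed.

Lemma IeP f X Y V : reflect (V f = Zero /\ forall h, h \notin ssep X Y -> V h = X h)
  (V \in Ie f X Y).
Proof.
rewrite inE; apply: (iffP andP) => [[/subsetP hs /forallP ha]|[hf ha]]; split.
- apply/eqP; apply: contraT => nz.
  by move: (hs f); rewrite in_ssupp nz !inE eqxx => /(_ isT).
- by move=> h hn; move: (ha h); rewrite hn => /eqP.
- apply/subsetP=> h; rewrite !inE => nz; apply/andP; split.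
    by apply: contraNneq nz => ->; rewrite hf.
  case hS: (h \in ssep X Y); last by rewrite -ha ?hS.
  by move: hS; rewrite in_ssep; case: (X h).
- by apply/forallP=> h; apply/implyP=> hn; rewrite ha.
Qed.

Lemma scompA X Y Z : scomp (scomp X Y) Z = scomp X (scomp Y Z).
Proof. by apply/ffunP=> h; rewrite !scompE; case: (X h); case: (Y h). Qed.
Lemma sneg_comp X Y : sneg (scomp X Y) = scomp (sneg X) (sneg Y).
Proof. by apply/ffunP=> h; rewrite !snegE !scompE !snegE; case: (X h). Qed.

Lemma Iset_sym X Y : ssupp X = ssupp Y -> Iset X Y = Iset Y X.
Proof.
move=> hs; have es : ssep X Y = ssep Y X by apply/setP=> h; rewrite sep_sym.
rewrite /Iset es; apply: eq_bigr => e _; apply/setP=> V.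
apply/IeP/IeP => -[h1 h2]; split=> // h hn.
  by rewrite h2 ?es // (offS0 hs) // es.
by rewrite h2 -?es // (offS0 hs) // es.
Qed.
End Basics.

Section Main.
Variable E : finType.
Variable W : {set svec E}.
Hypothesis A1 : axA1 W.
Hypothesis A2 : axA2 W.
Hypothesis A3 : axA3 W.
Implicit Types X Y Z V U : svec E.

Definition Tset : {set svec E} :=
  [set Y | [forall U in W, (scomp Y U \in W) && (scomp (sneg Y) U \in W)]].

Lemma inTP Y : reflect (forall U, U \in W -> scomp Y U \in W /\ scomp (sneg Y) U \in W)
  (Y \in Tset).
Proof.
rewrite inE; apply: (iffP forallP) => [h U hU|h U].
  by move: (h U); rewrite hU => /andP.
by apply/implyP=> hU; apply/andP; apply: h.
Qed.

Lemma T_neg Y : Y \in Tset -> sneg Y \in Tset.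
Proof. by move/inTP=> h; apply/inTP=> U hU; rewrite snegK; case: (h U hU). Qed.

Lemma T_comp Y1 Y2 : Y1 \in Tset -> Y2 \in Tset -> scomp Y1 Y2 \in Tset.
Proof.
move=> /inTP h1 /inTP h2; apply/inTP=> U hU; rewrite sneg_comp !scompA.
by have [a b] := h2 U hU; split; [case: (h1 _ a) | case: (h1 _ b)].
Qed.

Lemma T_zero : [ffun _ => Zero] \in Tset.
Proof.
apply/inTP=> U hU.
have -> : scomp [ffun _ => Zero] U = U by apply/ffunP=> h; rewrite scompE ffunE.
have -> : sneg [ffun _ => Zero] = [ffun _ => Zero] :> svec E
  by apply/ffunP=> h; rewrite snegE !ffunE.
by have -> : scomp [ffun _ => Zero] U = U by apply/ffunP=> h; rewrite scompE ffunE.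
Qed.

Lemma WT_comp X Y : X \in W -> Y \in Tset -> scomp X Y \in W.
Proof.
move=> hX /inTP/(_ X hX) [h _].
have -> : scomp X Y = scomp X (scomp Y X).
  by apply/ffunP=> h'; rewrite !scompE; case: (X h'); case: (Y h').
by case: (A1 hX h).
Qed.

Lemma TW_comp X Y : X \in W -> Y \in Tset -> scomp Y X \in W.
Proof. by move=> hX /inTP/(_ X hX) []. Qed.

Lemma sym_T X : X \in W -> sneg X \in W -> X \in Tset.
Proof.
move=> h1 h2; apply/inTP=> U hU; split; first by case: (A1 h1 hU).
by case: (A1 h2 hU).
Qed.

Lemma sneg_sum X Y : ssupp X = ssupp Y ->
  sneg (ssum X (sneg Y)) = ssum Y (sneg X).
Proof.
move=> /supp_eqP hs; apply/ffunP=> h; move: (hs h).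
rewrite snegE !ssumE !in_ssep !scompE !snegE.
by case: (X h); case: (Y h).
Qed.

Lemma P_T X Y : X \in W -> Y \in W -> ssupp X = ssupp Y ->
  sneg X \notin W -> sneg Y \notin W ->
  Iset X (sneg Y) :&: W == set0 -> Iset (sneg X) Y :&: W == set0 ->
  ssum X (sneg Y) \in Tset.
Proof.
move=> hX hY hs nX nY i1 i2.
have hP : forall A B, A \in W -> B \in W -> ssupp A = ssupp B ->
   sneg A \notin W -> sneg B \notin W ->
   Iset A (sneg B) :&: W == set0 -> Iset (sneg A) B :&: W == set0 ->
   ssum A (sneg B) \in Pset W.
  move=> A B hA hB hAB nA nB j1 j2.
  apply/imset2P; exists A B => //; first by rewrite inE hA nA.
  by rewrite !inE hB nB /= hAB eqxx j1 j2.
apply/inTP=> U hU; split; first by apply: A3 => //; apply: hP.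
rewrite sneg_sum //; apply: A3 => //; apply: hP => //.
- by rewrite Iset_sym // supp_neg hs.
- by rewrite Iset_sym // supp_neg hs.
Qed.

Lemma red1 X Y V f : X \in W -> ssupp X = ssupp Y -> V \in W ->
  f \in ssep X (sneg Y) -> V \in Ie f X (sneg Y) ->
  let X' := scomp V (sneg X) in
  [/\ X' \in W, ssupp X' = ssupp Y,
      (forall h, h \notin ssep X (sneg Y) -> X' h = X h),
      (forall h, h \in ssep X' (sneg Y) -> h \in ssep X (sneg Y)) &
      #|ssep X' (sneg Y)| < #|ssep X (sneg Y)| ].
Proof.
move=> hX hs hV hf /IeP [hVf hVo] X'.
have hW : X' \in W by case: (A1 hV hX).
have off : forall h, h \notin ssep X (sneg Y) -> X' h = X h.
  move=> h hn; rewrite /X' scompE snegE (hVo h hn); by case: (X h).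
have sub : forall h, h \in ssep X' (sneg Y) -> h \in ssep X (sneg Y).
  move=> h; apply: contraTT => hn; rewrite !sepN off //.
  by move: hn; rewrite !sepN.
split=> //.
- rewrite -hs; apply: supp_eqI => h; rewrite /X' scompE snegE.
  case hS: (h \in ssep X (sneg Y)).
    by move: hS; rewrite sepN; case: (X h); case: (V h); case: (Y h).
  by rewrite (hVo h) ?hS //; case: (X h).
- apply: proper_card; apply/properP; split; first by apply/subsetP.
  exists f => //; move: hf; rewrite !sepN /X' scompE hVf snegE /=.
  by case: (X f); case: (Y f).
Qed.

Lemma sepN_sym X Y h : ssupp X = ssupp Y ->
  (h \in ssep X (sneg Y)) = (h \in ssep Y (sneg X)).
Proof. by move/supp_eqP/(_ h); rewrite !sepN; case: (X h); case: (Y h). Qed.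

Lemma sepN_card X Y : ssupp X = ssupp Y ->
  #|ssep Y (sneg X)| = #|ssep X (sneg Y)|.
Proof. by move=> hs; apply: eq_card => h; rewrite sepN_sym. Qed.

Lemma sep_negl X Y h : (h \in ssep (sneg X) Y) = (h \in ssep X (sneg Y)).
Proof. by rewrite !in_ssep !snegE; case: (X h); case: (Y h). Qed.

Lemma Ie_sym f (A B : svec E) : ssupp A = ssupp B -> Ie f A B = Ie f B A.
Proof.
move=> hs; apply/setP=> V.
apply/IeP/IeP => -[h1 h2]; split=> // h hn.
  have hn' : h \notin ssep A B by rewrite sep_sym.
  by rewrite h2 // (offS0 hs hn').
have hn' : h \notin ssep B A by rewrite sep_sym.
by rewrite h2 // (offS0 hs hn).
Qed.

Lemma Iset_elt X Y : (Iset X Y :&: W == set0) = false ->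
  exists f V, [/\ f \in ssep X Y, V \in Ie f X Y & V \in W].
Proof.
move/negbT/set0Pn=> [V /setIP [/bigcupP [f hf hV] hW]].
by exists f, V.
Qed.

Lemma flip_elt X Y : ssupp X = ssupp Y ->
  (exists f V, [/\ f \in ssep (sneg X) Y, V \in Ie f (sneg X) Y & V \in W]) ->
  (exists f V, [/\ f \in ssep Y (sneg X), V \in Ie f Y (sneg X) & V \in W]).
Proof.
move=> hs [f [V [h1 h2 h3]]]; exists f, V; split=> //.
  by rewrite sepN_sym // -sep_negl.
by rewrite Ie_sym // supp_neg.
Qed.

Definition frozen (B K : {set E}) (u : svec E) := forall V, V \in W ->
  (forall h, h \notin B -> V h = Zero) -> forall k, k \in K -> V k = u k /\ u k != Zero.

Definition Gc (K : {set E}) X Y := exists2 Z, Z \in Tset &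
  (forall h, h \notin ssep X (sneg Y) -> Z h = X h) /\ (forall k, k \in K -> Z k = Zero).

Lemma Gc_flip K X Y : ssupp X = ssupp Y -> Gc K Y X -> Gc K X Y.
Proof.
move=> hs [Z hZ [h1 h2]]; exists (sneg Z); first exact: T_neg.
split=> [h hn|k hk]; rewrite snegE.
  have hn' : h \notin ssep Y (sneg X) by rewrite -sepN_sym.
  by rewrite h1 // (offS hs hn).
by rewrite h2.
Qed.

Lemma frozenG B K u : frozen B K u -> forall X Y, X \in W -> Y \in W ->
  ssupp X = ssupp Y -> (forall h, h \notin B -> X h = Zero) -> Gc K X Y.
Proof.
move=> hfr X Y; have [n] := ubnP #|ssep X (sneg Y)|.
elim: n X Y => // n IH X Y ltn hX hY hs hB.
have red : forall X Y, #|ssep X (sneg Y)| < n.+1 -> X \in W -> Y \in W ->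
    ssupp X = ssupp Y -> (forall h, h \notin B -> X h = Zero) ->
    (exists f V, [/\ f \in ssep X (sneg Y), V \in Ie f X (sneg Y) & V \in W]) ->
    Gc K X Y.
  move=> {}X {}Y {}ltn {}hX {}hY {}hs {}hB [f [V [hf hI hV]]].
  have [hX' hs' off sub lt] := red1 hX hs hV hf hI.
  have lt' : #|ssep (scomp V (sneg X)) (sneg Y)| < n.
    by apply: leq_trans lt _; rewrite -ltnS.
  have hB' : forall h, h \notin B -> scomp V (sneg X) h = Zero.
    move=> h hh; rewrite off ?hB //; rewrite sepN hB //.
    by rewrite andbF.
  have [Z hZ [z1 z2]] := IH _ _ lt' hX' hY hs' hB'.
  exists Z => //; split=> // h hn; rewrite z1 ?off //.
  by apply: contra hn; apply: sub.
have hYB : forall h, h \notin B -> Y h = Zero.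
  by move=> h hh; apply/eqP; rewrite -(supp_eqP hs) hB.
have negB : forall A : svec E, (forall h, h \notin B -> A h = Zero) ->
    forall h, h \notin B -> sneg A h = Zero.
  by move=> A hA h hh; rewrite snegE hA.
case nX: (sneg X \in W).
  exists X; first exact: sym_T.
  split=> // k hk; have [x1 x2] := hfr X hX hB k hk.
  have [y1 _] := hfr _ nX (negB _ hB) k hk.
  by move: x2 y1; rewrite snegE x1; case: (u k).
case nY: (sneg Y \in W).
  exists (sneg Y); first by apply: sym_T => //; rewrite snegK.
  split=> [h hn|k hk]; first by rewrite snegE (offS hs).
  have [x1 x2] := hfr Y hY hYB k hk.
  have [y1 _] := hfr _ nY (negB _ hYB) k hk.
  by move: x2 y1; rewrite snegE x1; case: (u k).
case i1: (Iset X (sneg Y) :&: W == set0); last first.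
  by apply: red => //; apply: Iset_elt.
case i2: (Iset (sneg X) Y :&: W == set0); last first.
  apply: Gc_flip => //; apply: red => //.
  - by rewrite sepN_card.
  - by apply: flip_elt => //; apply: Iset_elt.
exists (ssum X (sneg Y)); first by apply: P_T => //; rewrite ?nX ?nY.
split=> [h hn|k hk].
  rewrite ssumE (negbTE hn) scompE snegE.
  by move: (supp_eqP hs h); case: (X h); case: (Y h).
have [x1 x2] := hfr X hX hB k hk; have [y1 _] := hfr Y hY hYB k hk.
by rewrite ssumE sepN x1 y1 eqxx x2.
Qed.

Definition Cc X Y e :=
  (exists2 V, V \in W & V e = Zero /\
      forall h, h \notin ssep X (sneg Y) -> V h = X h) \/
  (exists2 V, V \in W & V e = Zero /\
      forall h, h \notin ssep X (sneg Y) -> oppS (V h) = X h) \/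
  (exists2 Z, Z \in Tset & Z e = Zero /\
      forall h, h \notin ssep X (sneg Y) -> Z h = X h).

Lemma Cc_flip X Y e : ssupp X = ssupp Y -> Cc Y X e -> Cc X Y e.
Proof.
move=> hs.
have hn' : forall h, h \notin ssep X (sneg Y) -> h \notin ssep Y (sneg X).
  by move=> h hn; rewrite -sepN_sym.
case=> [[V hV [h1 h2]]|[[V hV [h1 h2]]|[Z hZ [h1 h2]]]].
- right; left; exists V => //; split=> // h hn.
  by rewrite h2 ?hn' // (offS hs hn).
- left; exists V => //; split=> // h hn.
  by rewrite (offS hs hn) -(h2 h (hn' h hn)) oppSK.
- right; right; exists (sneg Z); first exact: T_neg.
  split; first by rewrite snegE h1.
  by move=> h hn; rewrite snegE h2 ?hn' // (offS hs hn).
Qed.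

Lemma Cc_trans X X' Y e :
  (forall h, h \notin ssep X (sneg Y) -> X' h = X h) ->
  (forall h, h \in ssep X' (sneg Y) -> h \in ssep X (sneg Y)) ->
  Cc X' Y e -> Cc X Y e.
Proof.
move=> off sub.
have hn' : forall h, h \notin ssep X (sneg Y) -> h \notin ssep X' (sneg Y).
  by move=> h; apply: contra; apply: sub.
case=> [[V hV [h1 h2]]|[[V hV [h1 h2]]|[Z hZ [h1 h2]]]].
- by left; exists V => //; split=> // h hn; rewrite h2 ?hn' ?off.
- by right; left; exists V => //; split=> // h hn; rewrite h2 ?hn' ?off.
- by right; right; exists Z => //; split=> // h hn; rewrite h2 ?hn' ?off.
Qed.

Lemma lemC X Y e : X \in W -> Y \in W -> ssupp X = ssupp Y ->
  e \in ssep X (sneg Y) -> Cc X Y e.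
Proof.
move=> hX hY hs; have [n] := ubnP #|ssep X (sneg Y)|.
elim: n X Y hX hY hs => // n IH X Y hX hY hs ltn he.
have red : forall X Y, #|ssep X (sneg Y)| < n.+1 -> X \in W -> Y \in W ->
    ssupp X = ssupp Y -> e \in ssep X (sneg Y) ->
    (exists f V, [/\ f \in ssep X (sneg Y), V \in Ie f X (sneg Y) & V \in W]) ->
    Cc X Y e.
  move=> {}X {}Y {}ltn {}hX {}hY {}hs {}he [f [V [hf hI hV]]].
  have hXe : X e != Zero by move: he; rewrite sepN => /andP [].
  have [hVf hVo] := IeP _ _ _ _ hI.
  case hVe: (V e == Zero).
    by left; exists V => //; split=> //; apply/eqP.
  case hVe2: (V e == X e).
    have [hX' hs' off sub lt] := red1 hX hs hV hf hI.
    apply: (Cc_trans off sub).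
    have lt' : #|ssep (scomp V (sneg X)) (sneg Y)| < n.
      by apply: leq_trans lt _; rewrite -ltnS.
    apply: IH => //.
    move: he; rewrite !sepN scompE hVe /= (eqP hVe2).
    by case/andP=> -> ->.
  (* V e = - X e *)
  have hXW : scomp V X \in W by case: (A1 hV hX).
  have off2 : forall h, h \notin ssep X (sneg Y) -> scomp V X h = X h.
    by move=> h hn; rewrite scompE hVo //; case: (X h).
  have hs2 : ssupp X = ssupp (scomp V X).
    apply: supp_eqI => h; rewrite scompE.
    case hS: (h \in ssep X (sneg Y)).
      by move: hS; rewrite sepN; case: (X h); case: (V h); case: (Y h).
    by rewrite (hVo h) ?hS //; case: (X h).
  have he2 : e \in ssep X (scomp V X).
    move: hVe hVe2 hXe; rewrite in_ssep scompE.
    by case: (X e); case: (V e).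
  have /set0Pn [U /setIP [hU hUW]] := A2 hX hXW hs2 he2.
  have [hUe hUo] := IeP _ _ _ _ hU.
  left; exists U => //; split=> // h hn; apply: hUo.
  by rewrite in_ssep off2 //; case: (X h).
case nX: (sneg X \in W).
  have hs' : ssupp (sneg X) = ssupp Y by rewrite supp_neg.
  have he' : e \in ssep (sneg X) Y by rewrite sep_negl.
  have /set0Pn [V /setIP [hV hVW]] := A2 nX hY hs' he'.
  have [hVe hVo] := IeP _ _ _ _ hV.
  right; left; exists V => //; split=> // h hn.
  by rewrite hVo ?sep_negl // snegE oppSK.
case nY: (sneg Y \in W).
  have hs' : ssupp X = ssupp (sneg Y) by rewrite supp_neg.
  have /set0Pn [V /setIP [hV hVW]] := A2 hX nY hs' he.
  have [hVe hVo] := IeP _ _ _ _ hV.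
  by left; exists V.
case i1: (Iset X (sneg Y) :&: W == set0); last first.
  by apply: red => //; apply: Iset_elt.
case i2: (Iset (sneg X) Y :&: W == set0); last first.
  apply: Cc_flip => //; apply: red => //.
  - by rewrite sepN_card.
  - by rewrite -sepN_sym.
  - by apply: flip_elt => //; apply: Iset_elt.
right; right; exists (ssum X (sneg Y)); first by apply: P_T => //; rewrite ?nX ?nY.
split; first by rewrite ssumE he.
move=> h hn; rewrite ssumE (negbTE hn) scompE snegE.
by move: (supp_eqP hs h); case: (X h); case: (Y h).
Qed.

Lemma supp_comp X Y : ssupp (scomp X Y) = ssupp (scomp Y X).
Proof. by apply: supp_eqI => h; rewrite !scompE; case: (X h); case: (Y h). Qed.

Lemma lemTT Y1 Y2 e : Y1 \in Tset -> Y2 \in Tset -> ssupp Y1 = ssupp Y2 ->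
  e \in ssep Y1 Y2 ->
  exists2 Z, Z \in Tset & Z e = Zero /\ forall h, h \notin ssep Y1 Y2 -> Z h = Y1 h.
Proof.
move=> hT1 hT2 hs he.
case W0: (W == set0).
  exists [ffun h => if h == e then Zero else Y1 h].
    by apply/inTP=> U; rewrite (eqP W0) inE.
  split; first by rewrite ffunE eqxx.
  move=> h hn; rewrite ffunE; case: eqP => // ehe.
  by move: hn; rewrite ehe he.
have /set0Pn [U0 hU0] := negbT W0.
pose A := ssupp Y1.
have [U hU hmin] := @arg_minnP _ U0 (mem W) (fun V => #|ssupp V :\: A|) hU0.
pose K := ssupp U :\: A.
pose B := A :|: ssupp U.
have hfr : frozen B K U.
  move=> V hV hVB k hk.
  have sub : ssupp V :\: A \subset K.
    apply/subsetP=> h; rewrite !inE => /andP [hnA hV0].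
    rewrite hnA /=; apply: contraNT hV0 => hU0'.
    by apply/eqP; apply: hVB; rewrite !inE negb_or hnA hU0'.
  have eK : ssupp V :\: A = K.
    by apply/eqP; rewrite eqEcard sub /=; apply: hmin.
  have hVk : V k != Zero by move: hk; rewrite -eK !inE => /andP [].
  have hUk : U k != Zero by move: hk; rewrite !inE => /andP [].
  split=> //; apply/eqP; apply: contraT => neq.
  have hV1 : scomp V U \in W by case: (A1 hV hU).
  have hV2 : scomp U V \in W by case: (A1 hU hV).
  have hk2 : k \in ssep (scomp V U) (scomp U V).
    move: hVk hUk neq; rewrite in_ssep !scompE.
    by case: (V k); case: (U k).
  have /set0Pn [V'' /setIP [hI hW'']] := A2 hV1 hV2 (supp_comp V U) hk2.
  have [hk0 ho] := IeP _ _ _ _ hI.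
  have sub2 : ssupp V'' :\: A \subset K :\ k.
    apply/subsetP=> h; rewrite !inE => /andP [hnA hV0].
    have hhk : h != k by apply: contraNneq hV0 => ->; rewrite hk0.
    rewrite hhk hnA /=.
    have : scomp V U h != Zero.
      case hS: (h \in ssep (scomp V U) (scomp U V)).
        by move: hS; rewrite in_ssep; case: (scomp V U h).
      by rewrite -ho ?hS.
    rewrite scompE; case hVh: (V h == Zero) => /=.
      by [].
    move=> _; move/setP: eK => /(_ h); rewrite !inE hnA hVh /= => <-.
    by [].
  have := hmin _ hW''; rewrite -/K => le.
  have le2 := subset_leq_card sub2; have := leq_trans le le2.
  by rewrite (cardsD1 k K) hk add1n ltnn.
have hX1 : scomp Y1 U \in W by apply: TW_comp.
have hX2 : scomp Y2 U \in W by apply: TW_comp.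
have hX1' : scomp (sneg Y1) U \in W by apply: TW_comp => //; apply: T_neg.
have hX2' : scomp (sneg Y2) U \in W by apply: TW_comp => //; apply: T_neg.
have hsY := supp_eqP hs.
have hsX : ssupp (scomp Y1 U) = ssupp (scomp Y2 U).
  by apply: supp_eqI=> h; rewrite !scompE; move: (hsY h); case: (Y1 h); case: (Y2 h).
have hsX' : ssupp (scomp (sneg Y1) U) = ssupp (scomp (sneg Y2) U).
  by apply: supp_eqI=> h; rewrite !scompE !snegE; move: (hsY h); case: (Y1 h); case: (Y2 h).
have heX : e \in ssep (scomp Y1 U) (scomp Y2 U).
  by move: he; rewrite !in_ssep !scompE; case: (Y1 e); case: (Y2 e).
have heX' : e \in ssep (scomp (sneg Y1) U) (scomp (sneg Y2) U).
  by move: he; rewrite !in_ssep !scompE !snegE; case: (Y1 e); case: (Y2 e).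
have /set0Pn [V /setIP [hVI hV]] := A2 hX1 hX2 hsX heX.
have /set0Pn [Y' /setIP [hYI hY']] := A2 hX1' hX2' hsX' heX'.
have [hVe hVo] := IeP _ _ _ _ hVI.
have [hYe hYo] := IeP _ _ _ _ hYI.
have hX : scomp V Y' \in W by case: (A1 hV hY').
have hY : scomp Y' V \in W by case: (A1 hY' hV).
have offB : forall h, h \notin B -> Y1 h = Zero /\ U h = Zero.
  move=> h; rewrite !inE negb_or => /andP [/negbNE/eqP -> /negbNE/eqP ->].
  by [].
have hXB : forall h, h \notin B -> scomp V Y' h = Zero.
  move=> h /offB [hy hu].
  have hy2 : Y2 h = Zero by apply/eqP; rewrite -hsY hy.
  rewrite scompE hVo; last by rewrite in_ssep !scompE hy hy2 hu.
  rewrite hYo; last by rewrite in_ssep !scompE !snegE hy hy2 hu.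
  by rewrite !scompE !snegE hy hu.
have [Z hZ [z1 z2]] := frozenG hfr hX hY (supp_comp V Y') hXB.
exists Z => //; split.
  have hXe : scomp V Y' e = Zero by rewrite scompE hVe hYe.
  by rewrite z1; [exact: hXe | rewrite sepN hXe andbC].
move=> h hn.
case hA: (Y1 h == Zero).
  case hK: (h \in K); first by rewrite z2 // (eqP hA).
  have hB : h \notin B.
    by move: hK; rewrite !inE hA /= => ->.
  have hXh := hXB h hB.
  by rewrite z1; [rewrite hXh (eqP hA) | rewrite sepN hXh andbC].
have hy2 := offS0 hs hn.
have hn1 : h \notin ssep (scomp Y1 U) (scomp Y2 U).
  by rewrite in_ssep !scompE -hy2; move: hA; case: (Y1 h).
have hn2 : h \notin ssep (scomp (sneg Y1) U) (scomp (sneg Y2) U).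
  by rewrite in_ssep !scompE !snegE -hy2; move: hA; case: (Y1 h).
have eX : scomp V Y' h = Y1 h.
  by rewrite scompE hVo // !scompE hA /= hA.
have eY : scomp Y' V h = oppS (Y1 h).
  by rewrite scompE hYo // !scompE snegE; move: hA; case: (Y1 h).
have hn3 : h \notin ssep (scomp V Y') (sneg (scomp Y' V)).
  by rewrite sepN eX eY; move: hA; case: (Y1 h).
by rewrite z1 // eX.
Qed.

End Main.

Section Lift.
Variable E : finType.
Implicit Types X Y V : svec E.
Implicit Types Z : svec (option E).

Definition ext X (s : sign) : svec (option E) :=
  [ffun o => if o is Some e then X e else s].

Lemma srestr_ext X s : srestr (ext X s) = X.
Proof. by apply/ffunP=> h; rewrite !ffunE. Qed.
Lemma ext_None X s : ext X s None = s.
Proof. by rewrite ffunE. Qed.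
Lemma ext_Some X s h : ext X s (Some h) = X h.
Proof. by rewrite ffunE. Qed.
Lemma srestrE Z h : srestr Z h = Z (Some h).
Proof. by rewrite ffunE. Qed.
Lemma srestr_neg Z : srestr (sneg Z) = sneg (srestr Z).
Proof. by apply/ffunP=> h; rewrite !ffunE. Qed.
Lemma srestr_comp Z1 Z2 : srestr (scomp Z1 Z2) = scomp (srestr Z1) (srestr Z2).
Proof. by apply/ffunP=> h; rewrite !ffunE. Qed.
Lemma sep_Some Z1 Z2 h :
  (Some h \in ssep Z1 Z2) = (h \in ssep (srestr Z1) (srestr Z2)).
Proof. by rewrite !in_ssep !srestrE. Qed.
Lemma supp_restr Z1 Z2 : ssupp Z1 = ssupp Z2 -> ssupp (srestr Z1) = ssupp (srestr Z2).
Proof.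
by move/supp_eqP=> hs; apply: supp_eqI => h; rewrite !srestrE hs.
Qed.
Lemma sep_neg (A B : svec E) h : (h \in ssep (sneg A) (sneg B)) = (h \in ssep A B).
Proof. by rewrite !in_ssep !snegE; case: (A h); case: (B h). Qed.
End Lift.

Section Main2.
Variable E : finType.
Variable W : {set svec E}.
Hypothesis A1 : axA1 W.
Hypothesis A2 : axA2 W.
Hypothesis A3 : axA3 W.
Implicit Types X Y V : svec E.
Implicit Types Z : svec (option E).

Definition Oset : {set svec (option E)} :=
  [set Z : svec (option E) | match Z None with
           | Plus => srestr Z \in W
           | Minus => sneg (srestr Z) \in W
           | Zero => srestr Z \in Tset W end].

Lemma inO Z : (Z \in Oset) = match Z None with
           | Plus => srestr Z \in W
           | Minus => sneg (srestr Z) \in W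
           | Zero => srestr Z \in Tset W end.
Proof. by rewrite inE. Qed.

Lemma O_neg Z : Z \in Oset -> sneg Z \in Oset.
Proof.
rewrite !inO snegE srestr_neg.
case: (Z None) => /= h.
- by rewrite snegK.
- by [].
- exact: T_neg.
Qed.

Lemma O_comp Z1 Z2 : Z1 \in Oset -> Z2 \in Oset -> scomp Z1 Z2 \in Oset.
Proof.
rewrite !inO scompE srestr_comp.
case: (Z1 None) => /= h1; case: (Z2 None) => /= h2.
- by case: (A1 h1 h2).
- by have [_] := A1 h1 h2; rewrite snegK.
- exact: WT_comp.
- by rewrite sneg_comp; case: (A1 h1 h2).
- by rewrite sneg_comp; case: (A1 h1 h2).
- by rewrite sneg_comp; apply: WT_comp => //; apply: T_neg.
- exact: TW_comp.
- by rewrite sneg_comp; apply: TW_comp => //; apply: T_neg.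
- exact: T_comp.
Qed.

Lemma O_zero : [ffun _ => Zero] \in Oset.
Proof.
rewrite inO ffunE.
have -> : srestr [ffun _ => Zero] = [ffun _ => Zero] :> svec E.
  by apply/ffunP=> h; rewrite !ffunE.
exact: T_zero.
Qed.

Definition O4c Z1 Z2 e := exists2 Z, Z \in Oset & Z e = Zero /\
  forall f, f \notin ssep Z1 Z2 -> Z f = scomp Z1 Z2 f /\ Z f = scomp Z2 Z1 f.

Definition O4d Z1 Z2 e := exists2 Z, Z \in Oset & Z e = Zero /\
  forall f, f \notin ssep Z1 Z2 -> Z f = Z1 f.

Lemma O4c_of Z1 Z2 e : ssupp Z1 = ssupp Z2 -> O4d Z1 Z2 e -> O4c Z1 Z2 e.
Proof.
move=> hs [Z hZ [h1 h2]]; exists Z => //; split=> // f hf.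
rewrite !scompE h2 // -(offS0 hs hf).
by case: (Z1 f).
Qed.

Lemma O4d_neg Z1 Z2 e : O4d (sneg Z1) (sneg Z2) e -> O4d Z1 Z2 e.
Proof.
move=> [Z hZ [h1 h2]]; exists (sneg Z); first exact: O_neg.
split; first by rewrite snegE h1.
by move=> f hf; rewrite snegE h2 ?sep_neg // snegE oppSK.
Qed.

Lemma O4_main Z1 Z2 e : Z1 \in Oset -> Z2 \in Oset -> ssupp Z1 = ssupp Z2 ->
  e \in ssep Z1 Z2 -> Z1 None != Minus -> O4d Z1 Z2 e.
Proof.
move=> h1 h2 hs he nM.
have hsN := supp_eqP hs None.
have hsr := supp_restr hs.
move: h1 h2; rewrite !inO.
case hZ1: (Z1 None) nM hsN => // _; case hZ2: (Z2 None) => // _ hX1 hX2.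
- (* Plus Plus *)
  case: e he => [e|]; last by rewrite in_ssep hZ1 hZ2.
  rewrite sep_Some => he.
  have /set0Pn [V /setIP [hI hV]] := A2 hX1 hX2 hsr he.
  have [hVe hVo] := IeP _ _ _ _ hI.
  exists (ext V Plus); first by rewrite inO ext_None srestr_ext.
  split; first by rewrite ext_Some.
  case=> [h|]; last by rewrite ext_None hZ1.
  by rewrite sep_Some ext_Some => hn; rewrite hVo // srestrE.
- (* Plus Minus *)
  have hsY : ssupp (srestr Z1) = ssupp (sneg (srestr Z2)) by rewrite supp_neg.
  have sepE : forall h, (Some h \in ssep Z1 Z2) =
      (h \in ssep (srestr Z1) (sneg (sneg (srestr Z2)))).
    by move=> h; rewrite snegK sep_Some.
  case: e he => [e|] he.
    rewrite sepE in he.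
    case: (lemC A1 A2 A3 hX1 hX2 hsY he) => [[V hV [hVe hVo]]|[[V hV [hVe hVo]]|[Z hZ [hZe hZo]]]].
    + exists (ext V Plus); first by rewrite inO ext_None srestr_ext.
      split; first by rewrite ext_Some.
      case=> [h|]; last by rewrite ext_None hZ1.
      by rewrite sepE ext_Some => hn; rewrite hVo // srestrE.
    + exists (ext (sneg V) Minus); first by rewrite inO ext_None srestr_ext snegK.
      split; first by rewrite ext_Some snegE hVe.
      case=> [h|]; last by rewrite in_ssep hZ1 hZ2.
      by rewrite sepE ext_Some snegE => hn; rewrite hVo // srestrE.
    + exists (ext Z Zero); first by rewrite inO ext_None srestr_ext.
      split; first by rewrite ext_Some.
      case=> [h|]; last by rewrite in_ssep hZ1 hZ2.
      by rewrite sepE ext_Some => hn; rewrite hZo // srestrE.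
  have hfr : frozen W setT set0 (srestr Z1).
    by move=> V _ _ k; rewrite inE.
  have [|Z hZ [hZo _]] := frozenG A1 A3 hfr hX1 hX2 hsY.
    by move=> h; rewrite inE.
  exists (ext Z Zero); first by rewrite inO ext_None srestr_ext.
  split; first by rewrite ext_None.
  case=> [h|]; last by rewrite in_ssep hZ1 hZ2.
  by rewrite sepE ext_Some => hn; rewrite hZo // srestrE.
- (* Zero Zero *)
  case: e he => [e|]; last by rewrite in_ssep hZ1 hZ2.
  rewrite sep_Some => he.
  have [Z hZ [hZe hZo]] := lemTT A1 A2 A3 hX1 hX2 hsr he.
  exists (ext Z Zero); first by rewrite inO ext_None srestr_ext.
  split; first by rewrite ext_Some.
  case=> [h|]; last by rewrite ext_None hZ1.
  by rewrite sep_Some ext_Some => hn; rewrite hZo // srestrE.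
Qed.

Lemma O_is_OM : oriented_matroid Oset.
Proof.
split.
- exact: O_zero.
- exact: O_neg.
- exact: O_comp.
- move=> Z1 Z2 h1 h2 hs e he; apply: O4c_of => //.
  case hM: (Z1 None == Minus).
    apply: O4d_neg; apply: O4_main.
    + exact: O_neg.
    + exact: O_neg.
    + by rewrite !supp_neg.
    + by rewrite sep_neg.
    + by rewrite snegE (eqP hM).
  by apply: O4_main => //; rewrite hM.
Qed.

Lemma W_eq : W = [set srestr X | X in Oset & X None == Plus].
Proof.
apply/setP=> V; apply/idP/imsetP.
  move=> hV; exists (ext V Plus); last by rewrite srestr_ext.
  by rewrite inE inO ext_None srestr_ext hV.
move=> [Z]; rewrite inE => /andP [hO /eqP hP] ->.
by move: hO; rewrite inO hP.
Qed.
End Main2.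

Unset Implicit Arguments.
Theorem lemma3p1 (E : finType) (W : {set svec E}) :
  axA1 W -> axA2 W -> axA3 W -> affine_oriented_matroid W.
Proof.
move=> A1 A2 A3; exists (Oset W); split.
  exact: O_is_OM.
exact: W_eq.
Qed.
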